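(* Let $I$ be the set of initial statements of a definite action theory. Every $\mathbf{S5}$-state satisfying $I$ is equivalent to an $\mathbf{S5}$-state $(M',s')$ with $|M'[S]|\le 2^{|\mathcal F|}$.
   Context: Agents $\mathcal{AG}=\{1,\dots,n\}$ (finite), finite set of fluents $\mathcal F$. Belief formulae are built from propositional (fluent) formulae over $\mathcal F$ with $\mathbf B_i$, Boolean connectives and $\mathbf E_\alpha,\mathbf C_\alpha$; $\mathbf C=\mathbf C_{\mathcal{AG}}$. Kripke structure $M$: worlds $M[S]$, interpretations $M[\pi](u)\subseteq\mathcal F$, relations $M[i]$; state $(M,s)$; standard semantics ($\mathbf B_i\varphi$: $\varphi$ at all $M[i]$-successors; $\mathbf E_\alpha$: all $\mathbf B_i$, $i\in\alpha$; $\mathbf C_\alpha\varphi$: $\mathbf E^k_\alpha\varphi$ for all $k\ge0$). $\mathbf{S5}$-state: every $M[i]$ an equivalence relation. Two states are equivalent if they satisfy the same belief formulae. A state satisfies a set $I$ of statements ''initially $\varphi$'' if it satisfies every such $\varphi$. A definite action theory $(I,D)$ consists of a domain $D$ (action descriptions) and a set $I$ of statements each of one of the forms initially $\varphi$, initially $\mathbf C\varphi$, initially $\mathbf C(\mathbf B_i\varphi)$, initially $\mathbf C(\mathbf B_i\varphi\vee\mathbf B_i\neg\varphi)$, initially $\mathbf C(\neg\mathbf B_i\varphi\wedge\neg\mathbf B_i\neg\varphi)$ ($\varphi$ a fluent formula, $i$ an agent), such that for every fluent formula $\varphi$ and agent $i$, $I$ contains a statement of one of the last three forms with this $i$ and $\varphi$.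 *)

(* Defs.v *)
From mathcomp Require Import all_boot.
Set Implicit Arguments. Unset Strict Implicit. Unset Printing Implicit Defensive.

Section Logic.
Variables (A : finType) (F : finType) .

Inductive fform :=
| FAtom of F
| FNot of fform
| FAnd of fform & fform
| FOr of fform & fform.

Inductive bform :=
| BFl of fform
| BB of A & bform
| BNot of bform
| BAnd of bform & bform
| BOr of bform & bform
| BImp of bform & bform
| BE of {set A} & bform
| BC of {set A} & bform.

Record kripke (W : Type) := Kripke {
  kval : W -> {set F};
  krel : A -> W -> W -> Prop
}.

Fixpoint fsat (I : {set F}) (p : fform) : Prop :=
  match p with
  | FAtom f => f \in I
  | FNot q => ~ fsat I q
  | FAnd q r => fsat I q /\ fsat I r
  | FOr q r => fsat I q \/ fsat I r
  end.

(* reach M al k u v : v is reachable from u by exactly k steps of relations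
   of agents in al (so E_al^k phi holds at u iff phi holds at all such v) *)
Fixpoint reach W (M : kripke W) (al : {set A}) (k : nat) (u v : W) : Prop :=
  match k with
  | 0 => u = v
  | k'.+1 => exists i, exists w, i \in al /\ krel M i u w /\ reach M al k' w v
  end.

Fixpoint holds W (M : kripke W) (u : W) (p : bform) : Prop :=
  match p with
  | BFl q => fsat (kval M u) q
  | BB i q => forall v, krel M i u v -> holds M v q
  | BNot q => ~ holds M u q
  | BAnd q r => holds M u q /\ holds M u r
  | BOr q r => holds M u q \/ holds M u r
  | BImp q r => holds M u q -> holds M u r
  | BE al q => forall i, i \in al -> forall v, krel M i u v -> holds M v q
  | BC al q => forall k v, reach M al k u v -> holds M v q
  end.

Definition S5 W (M : kripke W) : Prop :=
  forall i, [/\ (forall u, krel M i u u),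
               (forall u v, krel M i u v -> krel M i v u) &
               (forall u v w, krel M i u v -> krel M i v w -> krel M i u w)].

Definition equiv_state W W' (M : kripke W) (s : W) (M' : kripke W') (s' : W') : Prop :=
  forall p, holds M s p <-> holds M' s' p.

Inductive init_stmt :=
| InitF of fform
| InitC of fform
| InitCB of A & fform
| InitCBW of A & fform
| InitCN of A & fform.

Definition CAll (p : bform) := BC setT p.

Definition init_formula (st : init_stmt) : bform :=
  match st with
  | InitF p => BFl p
  | InitC p => CAll (BFl p)
  | InitCB i p => CAll (BB i (BFl p))
  | InitCBW i p => CAll (BOr (BB i (BFl p)) (BB i (BFl (FNot p))))
  | InitCN i p => CAll (BAnd (BNot (BB i (BFl p))) (BNot (BB i (BFl (FNot p)))))
  end.

Definition sat_init W (M : kripke W) (s : W) (I : init_stmt -> Prop) : Prop :=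
  forall st, I st -> holds M s (init_formula st).

Definition definite_init (I : init_stmt -> Prop) : Prop :=
  forall (p : fform) (i : A),
    I (InitCB i p) \/ I (InitCBW i p) \/ I (InitCN i p).

End Logic.

(* Main.v *)
Require Import Defs.
From mathcomp Require Import all_boot.
From Stdlib Require Import Classical.

Set Implicit Arguments. Unset Strict Implicit. Unset Printing Implicit Defensive.

Section Proof.
Variables (A F : finType).

Definition lit (J : {set F}) (f : F) : fform F :=
  if f \in J then FAtom f else FNot (FAtom f).

Definition chi (f0 : F) (J : {set F}) : fform F :=
  foldr (fun f acc => FAnd (lit J f) acc) (FOr (FAtom f0) (FNot (FAtom f0))) (enum F).

Lemma chi_foldr f0 J I0 (l : seq F) :
  fsat I0 (foldr (fun f acc => FAnd (lit J f) acc) (FOr (FAtom f0) (FNot (FAtom f0))) l)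
  <-> (forall f, f \in l -> (f \in I0) = (f \in J)).
Proof.
elim: l => [|a l IH] /=.
  split=> // _; case: (boolP (f0 \in I0)) => h; [left|right] => //.
split.
  move=> [ha /IH hl] f; rewrite in_cons => /orP [/eqP ->|]; last exact: hl.
  move: ha; rewrite /lit; case: (a \in J) => /=; first by move=> ->.
  by case: (a \in I0).
move=> h; split.
  have := h a (mem_head _ _); rewrite /lit; case: (a \in J) => /=; first by move=> ->.
  by move=> ->.
by apply/IH => f hf; apply: h; rewrite in_cons hf orbT.
Qed.

Lemma chiP f0 J I0 : fsat I0 (chi f0 J) <-> I0 = J.
Proof.
rewrite /chi chi_foldr; split.
  by move=> h; apply/setP => f; apply: h; rewrite mem_enum.
by move=> ->.
Qed.

Variables (W : Type) (M : kripke A F W) (s : W).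
Hypothesis S5M : S5 M.

Definition reachable u := exists k, reach M setT k s u.

Lemma reach_snoc (al : {set A}) k (x u v : W) (i : A) :
  i \in al -> reach M al k x u -> krel M i u v -> reach M al k.+1 x v.
Proof.
move=> hi; elim: k x => [|k IH] x /=.
  by move=> -> huv; exists i, v.
move=> [j [w [hj [hxw hr]]]] huv; exists j, w; split=> //; split=> //; exact: IH hr huv.
Qed.

Lemma reachable_step u v i : reachable u -> krel M i u v -> reachable v.
Proof. by move=> [k hk] huv; exists k.+1; apply: (reach_snoc (in_setT i) hk huv). Qed.

Lemma reachable_reach (al : {set A}) k u v : reachable u -> reach M al k u v -> reachable v.
Proof.
elim: k u => [|k IH] u /=; first by move=> ? <-.
move=> hu [i [w [_ [huw hr]]]]; apply: (IH w) => //; exact: reachable_step huw.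
Qed.

Definition krel' (i : A) (J J' : {set F}) : Prop :=
  J = J' \/ exists a b, [/\ reachable a, reachable b, kval M a = J, kval M b = J'
                           & krel M i a b].

Definition M' := Kripke (fun J : {set F} => J) krel'.

Hypothesis hdef : forall (p : fform F) (i : A),
  (forall k v, reach M setT k s v -> holds M v (BB i (BFl A p))) \/
  (forall k v, reach M setT k s v -> holds M v (BOr (BB i (BFl A p)) (BB i (BFl A (FNot p))))) \/
  (forall k v, reach M setT k s v ->
     holds M v (BAnd (BNot (BB i (BFl A p))) (BNot (BB i (BFl A (FNot p)))))).

Lemma back u i J' : reachable u -> krel' i (kval M u) J' ->
  exists v, krel M i u v /\ kval M v = J'.
Proof.
move=> hu [<-|[a [b [ha hb hJ hJ' hab]]]].
  by exists u; split=> //; case: (S5M i).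
case: (boolP (kval M u == J')) => [/eqP e|ne].
  by exists u; split=> //; case: (S5M i).
have [f0 _] : exists f0 : F, True.
  case: (set_0Vmem J') => [e0|[f _]]; last by exists f.
  case: (set_0Vmem (kval M u)) => [e1|[f _]]; last by exists f.
  by move: ne; rewrite e0 e1 eqxx.
have refl : forall w, krel M i w w by case: (S5M i).
case: (hdef (chi f0 J') i) => [h|[h|h]].
- case: hu => k hk; have := h k u hk u (refl u) => /= /chiP e.
  by move: ne; rewrite e eqxx.
- case: ha => k hk; case: (h k a hk) => /= h1.
    have /chiP e := h1 a (refl a).
    by move: ne; rewrite -hJ e eqxx.
  by exfalso; apply: (h1 b hab); apply/chiP.
- case: hu => k hk; case: (h k u hk) => /= _ h2.
  apply: NNPP => hn; apply: h2 => v huv hv; apply: hn; exists v; split=> //.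
  exact/(chiP f0).
Qed.

Lemma S5M' : S5 M'.
Proof.
move=> i; split.
- by move=> u; left.
- move=> u v /= [->|[a [b [ha hb hJ hJ' hab]]]]; first by left.
  by right; exists b, a; split=> //; case: (S5M i) => _ sy _; apply: sy.
- move=> u v w /= [->|huv] //.
  case: (huv) => [a [b [ha hb hJ hJ' hab]]] hvw; subst u.
  have [v1 [h1 e1]] := back ha (or_intror huv).
  have hv1 := reachable_step ha h1.
  have [w1 [h2 e2]] : exists w1, krel M i v1 w1 /\ kval M w1 = w.
    by apply: back => //; rewrite e1.
  right; exists a, w1; split=> //; first exact: reachable_step h2.
  by case: (S5M i) => _ _ tr; apply: tr h2.
Qed.

Lemma reach_fwd (al : {set A}) k u v : reachable u -> reach M al k u v ->
  reach M' al k (kval M u) (kval M v).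
Proof.
elim: k u => [|k IH] u /=; first by move=> _ ->.
move=> hu [i [w [hi [huw hr]]]]; exists i, (kval M w); split=> //; split.
  by right; exists u, w; split=> //; exact: reachable_step huw.
by apply: IH => //; exact: reachable_step huw.
Qed.

Lemma reach_bwd (al : {set A}) k u J : reachable u -> reach M' al k (kval M u) J ->
  exists v, reach M al k u v /\ kval M v = J.
Proof.
elim: k u => [|k IH] u /=; first by move=> _ <-; exists u.
move=> hu [i [w [hi [huw hr]]]].
have [v1 [h1 e1]] := back hu huw; subst w.
have [v [hv ev]] := IH v1 (reachable_step hu h1) hr.
by exists v; split=> //; exists i, v1.
Qed.

Lemma equiv_main p u : reachable u -> (holds M u p <-> holds M' (kval M u) p).
Proof.
elim: p u => [q|i q IH|q IH|q IH r IH'|q IH r IH'|q IH r IH'|al q IH|al q IH] u hu /=.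
- by [].
- split.
    move=> h J hJ; have [v [hv <-]] := back hu hJ.
    by apply/IH; [exact: reachable_step hv | exact: h].
  move=> h v hv; apply/IH; first exact: reachable_step hv.
  by apply: h; right; exists u, v; split=> //; exact: reachable_step hv.
- by rewrite IH.
- by rewrite IH // IH'.
- by rewrite IH // IH'.
- by rewrite IH // IH'.
- split.
    move=> h j hj J hJ; have [v [hv <-]] := back hu hJ.
    by apply/IH; [exact: reachable_step hv | exact: h hv].
  move=> h j hj v hv; apply/IH; first exact: reachable_step hv.
  by apply: (h j hj); right; exists u, v; split=> //; exact: reachable_step hv.
- split.
    move=> h k J hJ; have [v [hv <-]] := reach_bwd hu hJ.
    by apply/IH; [exact: reachable_reach hv | exact: h hv].
  move=> h k v hv; apply/IH; first exact: reachable_reach hv.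
  exact: h (reach_fwd hu hv).
Qed.

End Proof.

Theorem lemma16 (A F : finType) (I : init_stmt A F -> Prop) :
  definite_init I ->
  forall (W : Type) (M : kripke A F W) (s : W),
    S5 M -> sat_init M s I ->
    exists (W' : finType) (M' : kripke A F W') (s' : W'),
      [/\ S5 M', #|W'| <= 2 ^ #|F| & equiv_state M s M' s'].
Proof.
move=> hI W M s hS hsat.
have hdef : forall (p : fform F) (i : A),
  (forall k v, reach M setT k s v -> holds M v (BB i (BFl A p))) \/
  (forall k v, reach M setT k s v -> holds M v (BOr (BB i (BFl A p)) (BB i (BFl A (FNot p))))) \/
  (forall k v, reach M setT k s v ->
     holds M v (BAnd (BNot (BB i (BFl A p))) (BNot (BB i (BFl A (FNot p)))))).
  move=> p i; case: (hI p i) => [h|[h|h]]; have := hsat _ h => /= H; tauto.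
exists {set F}%type, (M' M s), (kval M s); split.
- exact: S5M'.
- by rewrite -cardsT -powersetT card_powerset cardsT.
- move=> p; apply: (equiv_main hS hdef); by exists 0.
Qed.
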